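(* Let $p\geqslant 1$ and let $n_0,\dots,n_{p-1}>1$ be natural numbers; let $n$ be their least common multiple, and for $i\neq j$ let $d_{i,j}$ be the greatest common divisor of $n_i$ and $n_j$. Let $c_0,\dots,c_{p-1}$ be integers with $\sum_{i<p}c_i\,(n/n_i)=1$. Then for all positive rational numbers $t_0,\dots,t_{p-1}$ and $x$, putting $\beta=\prod_{i<p}t_i^{c_i(n/n_i)}$, we have $$\bigwedge_{i<p}\Re_{n_i}(x\cdot t_i)\iff \Re_n(x\cdot\beta)\wedge\bigwedge_{i\neq j}\Re_{d_{i,j}}(t_i\cdot t_j^{-1}).$$
   Context: For a natural number $k\geqslant 1$ and a positive rational $y$, $\Re_k(y)$ means that there exists a positive rational $x$ with $y=x^k$ (so $\Re_1(y)$ always holds). *)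

(* Defs.v *)
From mathcomp Require Import all_boot all_order all_algebra.
Set Implicit Arguments. Unset Strict Implicit. Unset Printing Implicit Defensive.
Import Order.TTheory GRing.Theory Num.Theory.
Local Open Scope ring_scope.

Definition Rek (k : nat) (y : rat) : Prop := exists x : rat, 0 < x /\ y = x ^+ k.

Definition lcm_all (p : nat) (ns : 'I_p -> nat) : nat := \big[lcmn/1%N]_(i < p) ns i.

(* Main.v *)
Require Import Defs.
From mathcomp Require Import all_boot all_order all_algebra.
Import Order.TTheory GRing.Theory Num.Theory.
Local Open Scope ring_scope.
Set Implicit Arguments. Unset Strict Implicit.

Lemma Rek_mul k a b : Rek k a -> Rek k b -> Rek k (a*b).
Proof. by move=> [u [u0 ->]] [v [v0 ->]]; exists (u*v); rewrite mulr_gt0 // exprMn. Qed.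

Lemma Rek_exprz k a (z : int) : Rek k a -> Rek k (a ^ z).
Proof.
move=> [u [u0 ->]]; exists (u ^ z); split; first exact: exprz_gt0.
exact: (exprzAC u k z).
Qed.

Lemma Rek_inv k a : Rek k a -> Rek k a^-1.
Proof. by move=> [u [u0 ->]]; exists u^-1; rewrite invr_gt0 u0 exprVn. Qed.

Lemma Rek_div k a b : Rek k a -> Rek k b -> Rek k (a/b).
Proof. move=> ha hb; have := Rek_mul ha (Rek_inv hb); done. Qed.

Lemma Rek_1 k : Rek k 1.
Proof. by exists 1; rewrite expr1n ltr01. Qed.

Lemma Rek_pow k a : 0 < a -> Rek k (a ^+ k).
Proof. by move=> a0; exists a. Qed.

Lemma Rek_dvd k l a : (k %| l)%N -> Rek l a -> Rek k a.
Proof.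
move=> /dvdnP [m ->] [u [u0 ->]]; exists (u ^+ m); split; first exact: exprn_gt0.
by rewrite exprM.
Qed.

Lemma Rek_prod k p (F : 'I_p -> rat) : (forall i, Rek k (F i)) -> Rek k (\prod_(i < p) F i).
Proof. by move=> h; apply: (big_ind (Rek k)) => //; [exact: Rek_1 | exact: Rek_mul]. Qed.

Lemma prod_exprz p (u : rat) (e : 'I_p -> int) : 0 < u ->
  \prod_(i < p) u ^ e i = u ^ (\sum_(i < p) e i).
Proof.
move=> u0; elim/big_rec2: _ => //= i y1 y2 _ ->.
by rewrite exprzDr // unitfE gt_eqF.
Qed.

Lemma unitpos (u : rat) : 0 < u -> u \is a GRing.unit.
Proof. by move=> u0; rewrite unitfE gt_eqF. Qed.

Theorem lemma2 (p : nat) (hp : (1 <= p)%N) (ns : 'I_p -> nat)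
  (hns : forall i, (1 < ns i)%N) (c : 'I_p -> int)
  (hc : \sum_(i < p) c i * ((lcm_all ns %/ ns i)%N)%:Z = 1)
  (t : 'I_p -> rat) (ht : forall i, 0 < t i) (x : rat) (hx : 0 < x) :
  (forall i, Rek (ns i) (x * t i)) <->
  (Rek (lcm_all ns) (x * \prod_(i < p) exprz (t i) (c i * ((lcm_all ns %/ ns i)%N)%:Z))
   /\ (forall i j : 'I_p, i != j -> Rek (gcdn (ns i) (ns j)) (t i / t j))).
Proof.
set n := lcm_all ns.
set e := fun i => c i * ((n %/ ns i)%N)%:Z.
have dvd_n : forall i, (ns i %| n)%N.
  by move=> i; rewrite /n /lcm_all; apply: (biglcmn_sup i).
have nK : forall i, ((n %/ ns i) * ns i)%N = n by move=> i; rewrite divnK.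
split.
- move=> h; split.
  + have -> : x * \prod_(i < p) t i ^ e i = \prod_(i < p) (x * t i) ^ e i.
      rewrite -[x in x * _]expr1z -hc -prod_exprz // -big_split /=.
      by apply: eq_bigr => i _; rewrite exprzMl ?unitpos ?ht.
    apply: Rek_prod => i; rewrite /e (mulrC (c _)) -exprz_exp.
    apply: Rek_exprz; have [u [u0 ->]] := h i.
    exists u; split => //.
    by rewrite -[in RHS](nK i) mulnC exprM.
  + move=> i j _.
    have -> : t i / t j = (x * t i) / (x * t j).
      by rewrite invfM mulrACA mulfV ?mul1r // gt_eqF.
    by apply: Rek_div; apply: (Rek_dvd _ (h _)); rewrite ?dvdn_gcdl ?dvdn_gcdr.
- move=> [hb hg] i.
  have -> : x * t i = (x * \prod_(j < p) t j ^ e j) * \prod_(j < p) (t i / t j) ^ e j.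
    rewrite -mulrA -big_split /=.
    under eq_bigr => j _ do rewrite -exprzMl ?unitpos ?invr_gt0 ?divr_gt0 ?ht //.
    under eq_bigr => j _ do rewrite mulrCA divff ?mulr1 ?gt_eqF ?ht //.
    by rewrite (prod_exprz e (ht i)) (_ : \sum_(j < p) e j = 1) ?expr1z.
  apply: Rek_mul; first by apply: (Rek_dvd _ hb).
  apply: Rek_prod => j; have [->|ne] := eqVneq i j.
    by rewrite divff ?gt_eqF ?ht // exp1rz; exact: Rek_1.
  have [w [w0 ->]] := hg i j ne.
  rewrite /e (mulrC (c _)) -exprz_exp; apply: Rek_exprz.
  rewrite [X in Rek _ X](_ : _ = w ^+ (gcdn (ns i) (ns j) * (n %/ ns j))); last by rewrite exprM.
  apply: (Rek_dvd _ (Rek_pow _ w0)).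
  set d := gcdn (ns i) (ns j).
  have nj0 : (0 < ns j)%N by apply: ltnW (hns j).
  rewrite -(dvdn_pmul2r nj0) -mulnA nK -(muln_lcm_gcd (ns i) (ns j)) mulnC.
  by apply: dvdn_mul => //; rewrite dvdn_lcm !dvd_n.
Qed.
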